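(* For a positive integer $n$ and $1\le k\le n+1$, say that $k$ is reconstructing (resp. directed-reconstructing) for $n$ if any two permutations of $[n]\cup\{0,n+1\}$ having the same $k$-profile (resp. the same directed $k$-profile) are equal, i.e. every $k$-profile (resp. directed $k$-profile) is the $k$-profile of at most one permutation. Let $k_u(n)$ (resp. $k_d(n)$) be the minimum reconstructing (resp. directed-reconstructing) $k$. Then: (a) $k_u(n)=\max\{1,n-3\}$; (b) $k_d(n)\ge \lceil (n-3)/2\rceil$ for $n\ge 4$, and $k_d(n)=1$ for $n=1,2,3$.
   Context: $[n]=\{1,\dots,n\}$. Permutations are of $[n]\cup\{0,n+1\}$, always with $0$ at the leftmost position and $n+1$ at the rightmost position. For a permutation $P$ and elements $t<t+i$, let $\min_{t,t+i}$ and $\max_{t,t+i}$ be the minimum and maximum of the elements located on $P$ in the interval delimited by the element $t$ (included) and the element $t+i$ (included). The $k$-profile of $P$ ($1\le k\le n+1$) is the set of constraints $\{(t,t+i,[\min_{t,t+i},\max_{t,t+i}]) : 1\le i\le k,\ 0\le t\le n+1-i\}$ (no information on which of $t$, $t+i$ is to the left). The directed $k$-profile of $P$ consists of the same constraints together with, for each such pair, the information whether $t$ is to the left or to the right of $t+i$ in $P$. *)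

(* Defs.v *)
From mathcomp Require Import all_boot all_order all_fingroup.
Unset Printing Implicit Defensive.

(* A permutation of [n] ∪ {0, n+1} is P : 'S_(n.+2), read as
   position p ↦ element (val (P p)); positions are 0..n+1 left to right. *)

Definition valid_perm n (P : 'S_(n.+2)) : Prop :=
  P ord0 = ord0 /\ P ord_max = ord_max.

Definition posn n (P : 'S_(n.+2)) (x : nat) : nat :=
  val ((P^-1)%g (inord x : 'I_(n.+2))).

Definition imin n (P : 'S_(n.+2)) (t u : nat) : nat :=
  \big[minn/n.+1]_(p < n.+2 | minn (posn n P t) (posn n P u) <= p <= maxn (posn n P t) (posn n P u))
     val (P p).
Definition imax n (P : 'S_(n.+2)) (t u : nat) : nat :=
  \max_(p < n.+2 | minn (posn n P t) (posn n P u) <= p <= maxn (posn n P t) (posn n P u))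
     val (P p).

Definition same_profile n k (P Q : 'S_(n.+2)) : Prop :=
  forall i t, 1 <= i <= k -> t + i <= n.+1 ->
    imin n P t (t + i) = imin n Q t (t + i) /\ imax n P t (t + i) = imax n Q t (t + i).

Definition same_dprofile n k (P Q : 'S_(n.+2)) : Prop :=
  forall i t, 1 <= i <= k -> t + i <= n.+1 ->
    [/\ imin n P t (t + i) = imin n Q t (t + i),
        imax n P t (t + i) = imax n Q t (t + i) &
        (posn n P t < posn n P (t + i)) = (posn n Q t < posn n Q (t + i))].

Definition reconstructing n k : Prop :=
  forall P Q : 'S_(n.+2), valid_perm n P -> valid_perm n Q -> same_profile n k P Q -> P = Q.

Definition dreconstructing n k : Prop :=
  forall P Q : 'S_(n.+2), valid_perm n P -> valid_perm n Q -> same_dprofile n k P Q -> P = Q.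

Definition is_ku n k : Prop :=
  [/\ 1 <= k <= n.+1, reconstructing n k &
      forall k', 1 <= k' < k -> ~ reconstructing n k'].

Definition is_kd n k : Prop :=
  [/\ 1 <= k <= n.+1, dreconstructing n k &
      forall k', 1 <= k' < k -> ~ dreconstructing n k'].

(* Main.v *)
Require Import Defs.
From mathcomp Require Import all_boot all_order all_fingroup.
From mathcomp Require Import zify.
From Stdlib Require Import Classical.

Section Inf.
Variable n : nat.
Implicit Types P Q : 'S_(n.+2).

Definition el P (i : nat) : nat := val (P (inord i)).
Definition inseg P t u v :=
  minn (posn n P t) (posn n P u) <= posn n P v <= maxn (posn n P t) (posn n P u).

Lemma posn_lt P x : posn n P x < n.+2.
Proof. exact: ltn_ord. Qed.

Lemma el_lt P i : el P i < n.+2.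
Proof. exact: ltn_ord. Qed.

Lemma el_posn P x : x <= n.+1 -> el P (posn n P x) = x.
Proof.
move=> hx; rewrite /el /posn inord_val permKV; exact: inordK.
Qed.

Lemma posn_el P i : i <= n.+1 -> posn n P (el P i) = i.
Proof.
move=> hi; rewrite /el /posn inord_val permK; exact: inordK.
Qed.

Lemma posn_inj P x y : x <= n.+1 -> y <= n.+1 -> posn n P x = posn n P y -> x = y.
Proof. move=> hx hy e; by rewrite -(el_posn P _ hx) -(el_posn P _ hy) e. Qed.

Lemma el_inj P i j : i <= n.+1 -> j <= n.+1 -> el P i = el P j -> i = j.
Proof. move=> hx hy e; by rewrite -(posn_el P _ hx) -(posn_el P _ hy) e. Qed.

Lemma valid_posn0 P : valid_perm n P -> posn n P 0 = 0.
Proof.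
case=> h0 _. apply/eqP; rewrite /posn.
have -> : (inord 0 : 'I_n.+2) = ord0 by apply/val_inj; rewrite /= inordK.
by rewrite -{1}h0 permK.
Qed.

Lemma valid_posnN P : valid_perm n P -> posn n P n.+1 = n.+1.
Proof.
case=> _ h1. apply/eqP; rewrite /posn.
have -> : (inord n.+1 : 'I_n.+2) = ord_max by apply/val_inj; rewrite /= inordK.
by rewrite -{1}h1 permK.
Qed.

Lemma bigmin_gen (I : finType) (C : pred I) (F : I -> nat) x0 :
  \big[minn/x0]_(i | C i) F i = x0 \/ exists2 i, C i & \big[minn/x0]_(i | C i) F i = F i.
Proof.
apply: (big_ind (fun v => v = x0 \/ exists2 i, C i & v = F i)).
- by left.
- move=> a b [->|[i Ci ->]] [->|[j Cj ->]].
  + by left; rewrite minnn.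
  + case: (leqP x0 (F j)) => h. left; lia. right; exists j => //; lia.
  + case: (leqP x0 (F i)) => h. left; lia. right; exists i => //; lia.
  + case: (leqP (F i) (F j)) => h. right; exists i => //; lia. right; exists j => //; lia.
- move=> i Ci; right; by exists i.
Qed.

Lemma bigmax_gen (I : finType) (C : pred I) (F : I -> nat) :
  \max_(i | C i) F i = 0 \/ exists2 i, C i & \max_(i | C i) F i = F i.
Proof.
apply: (big_ind (fun v => v = 0 \/ exists2 i, C i & v = F i)).
- by left.
- move=> a b [->|[i Ci ->]] [->|[j Cj ->]].
  + by left.
  + right; exists j => //; lia.
  + right; exists i => //; lia.
  + case: (leqP (F i) (F j)) => h. right; exists j => //; lia. right; exists i => //; lia.
- move=> i Ci; right; by exists i.
Qed.

Lemma bigmin_le_cond_nat (I : finType) (C : pred I) (F : I -> nat) x0 j :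
  C j -> \big[minn/x0]_(i | C i) F i <= F j.
Proof.
have : j \in index_enum I by rewrite mem_index_enum.
elim: (index_enum I) => // a r IH; rewrite inE big_cons; case/orP => [/eqP<-|jr] Cj.
  by rewrite Cj geq_minl.
case: (C a); last exact: IH.
by rewrite geq_min IH ?orbT.
Qed.

Lemma bigmax_ge_cond_nat (I : finType) (C : pred I) (F : I -> nat) j :
  C j -> F j <= \max_(i | C i) F i.
Proof.
have : j \in index_enum I by rewrite mem_index_enum.
elim: (index_enum I) => // a r IH; rewrite inE big_cons; case/orP => [/eqP<-|jr] Cj.
  by rewrite Cj leq_maxl.
case: (C a); last exact: IH.
by rewrite leq_max IH ?orbT.
Qed.

Lemma imin_le P t u v : v <= n.+1 -> inseg P t u v -> imin n P t u <= v.
Proof.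
move=> hv hs; rewrite /imin.
have := @bigmin_le_cond_nat _ (fun p : 'I_n.+2 => minn (posn n P t) (posn n P u) <= p <= maxn (posn n P t) (posn n P u)) (fun p => val (P p)) n.+1 ((P^-1)%g (inord v)) hs.
by rewrite /= permKV inordK.
Qed.

Lemma imax_ge P t u v : v <= n.+1 -> inseg P t u v -> v <= imax n P t u.
Proof.
move=> hv hs; rewrite /imax.
have := @bigmax_ge_cond_nat _ (fun p : 'I_n.+2 => minn (posn n P t) (posn n P u) <= p <= maxn (posn n P t) (posn n P u)) (fun p => val (P p)) ((P^-1)%g (inord v)) hs.
by rewrite /= permKV inordK.
Qed.

Lemma inseg_l P t u : inseg P t u t.
Proof. rewrite /inseg; lia. Qed.
Lemma inseg_r P t u : inseg P t u u.
Proof. rewrite /inseg; lia. Qed.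

Lemma imin_ex P t u : t <= n.+1 -> exists v, [/\ v <= n.+1, inseg P t u v & imin n P t u = v].
Proof.
move=> ht.
have hl := @imin_le P t u t ht (inseg_l P t u).
case: (@bigmin_gen _ (fun p : 'I_n.+2 => minn (posn n P t) (posn n P u) <= p <= maxn (posn n P t) (posn n P u)) (fun p => val (P p)) n.+1).
- move=> e. exists t; split => //; first exact: inseg_l.
  rewrite /imin e in hl *. lia.
- move=> [p Cp e]. exists (val (P p)); split.
  + exact: (ltn_ord (P p)).
  + by rewrite /inseg /posn inord_val permK.
  + by rewrite /imin e.
Qed.

Lemma imax_ex P t u : t <= n.+1 -> exists v, [/\ v <= n.+1, inseg P t u v & imax n P t u = v].
Proof.
move=> ht.
have hl := @imax_ge P t u t ht (inseg_l P t u).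
case: (@bigmax_gen _ (fun p : 'I_n.+2 => minn (posn n P t) (posn n P u) <= p <= maxn (posn n P t) (posn n P u)) (fun p => val (P p))).
- move=> e. exists t; split => //; first exact: inseg_l.
  rewrite /imax e in hl *. lia.
- move=> [p Cp e]. exists (val (P p)); split.
  + exact: (ltn_ord (P p)).
  + by rewrite /inseg /posn inord_val permK.
  + by rewrite /imax e.
Qed.

Lemma imin_sym P t u : imin n P t u = imin n P u t.
Proof. by rewrite /imin minnC maxnC. Qed.
Lemma imax_sym P t u : imax n P t u = imax n P u t.
Proof. by rewrite /imax minnC maxnC. Qed.

End Inf.
Arguments posn_inj {n P x y}.
Arguments el_inj {n P i j}.
Arguments el_posn {n} P {x}.
Arguments posn_el {n} P {i}.
Arguments valid_posn0 {n P}.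
Arguments valid_posnN {n P}.
Arguments imin_le {n P t u v}.
Arguments imax_ge {n P t u v}.
Arguments imin_ex {n} P t u.
Arguments imax_ex {n} P t u.
Arguments imin_sym {n} P t u.
Arguments imax_sym {n} P t u.
Arguments inseg {n}.
Arguments el {n}.
Arguments inseg_l {n} P t u.
Arguments inseg_r {n} P t u.
Arguments posn_lt {n} P x.
Arguments el_lt {n} P i.

Lemma prof_sym n k (P Q : 'S_(n.+2)) : same_profile n k P Q -> same_profile n k Q P.
Proof. move=> h i t hi ht; case: (h i t hi ht) => -> ->; by split. Qed.
Arguments prof_sym {n k P Q}.

Lemma prof_pair n k (P Q : 'S_(n.+2)) x z : same_profile n k P Q ->
  x <= n.+1 -> z <= n.+1 -> x != z -> x - z <= k -> z - x <= k ->
  imin n P x z = imin n Q x z /\ imax n P x z = imax n Q x z.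
Proof.
move=> h hx hz hne h1 h2.
case: (ltngtP x z) => hxz; last by rewrite hxz eqxx in hne.
- have := h (z - x) x; rewrite subnKC ?(ltnW hxz) //; apply; lia.
- rewrite (imin_sym P) (imin_sym Q) (imax_sym P) (imax_sym Q).
  have := h (x - z) z; rewrite subnKC ?(ltnW hxz) //; apply; lia.
Qed.
Arguments prof_pair {n k P Q x z}.

Lemma tmin n k (P Q : 'S_(n.+2)) x z v : same_profile n k P Q ->
  x <= n.+1 -> z <= n.+1 -> x != z -> x - z <= k -> z - x <= k ->
  v <= n.+1 -> inseg Q x z v -> exists w, [/\ w <= n.+1, inseg P x z w & w <= v].
Proof.
move=> h hx hz hne h1 h2 hv hs.
have [e _] := prof_pair h hx hz hne h1 h2.
have := imin_le hv hs; rewrite -e.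
have [w [hw1 hw2 ->]] := imin_ex P x z hx.
by exists w.
Qed.

Lemma tmax n k (P Q : 'S_(n.+2)) x z v : same_profile n k P Q ->
  x <= n.+1 -> z <= n.+1 -> x != z -> x - z <= k -> z - x <= k ->
  v <= n.+1 -> inseg Q x z v -> exists w, [/\ w <= n.+1, inseg P x z w & v <= w].
Proof.
move=> h hx hz hne h1 h2 hv hs.
have [_ e] := prof_pair h hx hz hne h1 h2.
have := imax_ge hv hs; rewrite -e.
have [w [hw1 hw2 ->]] := imax_ex P x z hx.
by exists w.
Qed.

Arguments tmin {n k P Q x z v}.
Arguments tmax {n k P Q x z v}.

Record fdiff n (P Q : 'S_(n.+2)) j a b c : Prop := FDiff {
  fd_j : 1 <= j <= n;
  fd_a : a <= n.+1; fd_b : b <= n.+1; fd_c : c <= n.+1;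
  fd_ab : a != b;
  fd_pa : posn n P a = j; fd_qb : posn n Q b = j;
  fd_pc : posn n P c = j.-1; fd_qc : posn n Q c = j.-1;
  fd_pre : forall x, x <= n.+1 -> (posn n P x < j \/ posn n Q x < j) -> posn n P x = posn n Q x
}.
Arguments fdiff {n}.

Lemma fdiff_sym n (P Q : 'S_(n.+2)) j a b c : fdiff P Q j a b c -> fdiff Q P j b a c.
Proof.
case=> h1 h2 h3 h4 h5 h6 h7 h8 h9 pre; constructor => //; first by rewrite eq_sym.
move=> x hx hh; symmetry; apply: pre => //; tauto.
Qed.

Section FD.
Variables (n j a b c : nat) (P Q : 'S_(n.+2)).
Hypothesis vP : valid_perm n P.
Hypothesis vQ : valid_perm n Q.
Hypothesis fd : fdiff P Q j a b c.

Lemma fd_qa : j < posn n Q a.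
Proof.
case: fd => hj ha hb hc hab pa qb pc qc pre.
case: (ltngtP (posn n Q a) j) => h //.
- have := pre a ha (or_intror h); lia.
- by move: hab; rewrite (posn_inj ha hb (etrans h (esym qb))) eqxx.
Qed.

Lemma fd_a_ne0 : a != 0.
Proof. case: fd => hj ha _ _ _ pa _ _ _ _; apply/eqP => e; move: pa; rewrite e valid_posn0 //; lia. Qed.

Lemma fd_a_neN : a != n.+1.
Proof. case: fd => hj ha _ _ _ pa _ _ _ _; apply/eqP => e; move: pa; rewrite e valid_posnN //; lia. Qed.

Lemma fd_qa_le : posn n Q a <= n.
Proof.
have hl := posn_lt Q a.
have hN := fd_a_neN.
case: fd => _ ha _ _ _ _ _ _ _ _.
have : posn n Q a != n.+1.
  apply/eqP => e; move: hN.
  by rewrite (posn_inj ha (leqnn _) (etrans e (esym (valid_posnN vQ)))) eqxx.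
lia.
Qed.

End FD.
Arguments fd_qa {n j a b c P Q}.
Arguments fd_qa_le {n j a b c P Q}.
Arguments fd_a_ne0 {n j a b c P Q}.
Arguments fd_a_neN {n j a b c P Q}.
Arguments fdiff_sym {n P Q j a b c}.

Lemma pos2 n (P : 'S_(n.+2)) x y w : x <= n.+1 -> y <= n.+1 -> w <= n.+1 ->
  posn n P y = (posn n P x).+1 -> inseg P x y w -> w = x \/ w = y.
Proof.
move=> hx hy hw e; rewrite /inseg => hs.
have : posn n P w = posn n P x \/ posn n P w = posn n P y by lia.
case=> h; [left|right]; exact: posn_inj h.
Qed.
Arguments pos2 {n P x y w}.

Lemma FD1 n k (P Q : 'S_(n.+2)) j a b c : same_profile n k P Q ->
  valid_perm n P -> valid_perm n Q -> fdiff P Q j a b c ->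
  c != a -> c - a <= k -> a - c <= k -> minn c a <= b <= maxn c a.
Proof.
move=> hp vP vQ fd hca h1 h2.
have qa := fd_qa fd.
case: (fd) => hj ha hb hc hab pa qb pc qc pre.
have sQ : inseg Q c a b by rewrite /inseg; lia.
have [w [hw1 hw2 hw3]] := tmin hp hc ha hca h1 h2 hb sQ.
have [w' [hw1' hw2' hw3']] := tmax hp hc ha hca h1 h2 hb sQ.
have e : posn n P a = (posn n P c).+1 by lia.
case: (pos2 hc ha hw1 e hw2) => ?; case: (pos2 hc ha hw1' e hw2') => ?; subst; lia.
Qed.
Arguments FD1 {n k P Q j a b c}.

Lemma FD n k (P Q : 'S_(n.+2)) j a b c : same_profile n k P Q ->
  valid_perm n P -> valid_perm n Q -> fdiff P Q j a b c ->
  k < maxn (c - a) (a - c).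
Proof.
move=> hp vP vQ fd.
have fd' := fdiff_sym fd.
case: (fd) => hj ha hb hc hab pa qb pc qc pre.
have hca : c != a by apply/eqP => e; move: pa pc; rewrite e; lia.
have hcb : c != b by apply/eqP => e; move: qb qc; rewrite e; lia.
rewrite ltnNge; apply/negP => hk.
have := FD1 hp vP vQ fd hca ltac:(lia) ltac:(lia).
move=> hb1.
have := FD1 (prof_sym hp) vQ vP fd' hcb ltac:(lia) ltac:(lia).
move: hab => /eqP hab; lia.
Qed.

Lemma neq_pos n (P : 'S_(n.+2)) x y : x <= n.+1 -> y <= n.+1 -> x != y -> posn n P x != posn n P y.
Proof. move=> hx hy hne; apply/eqP => e; move: hne; by rewrite (posn_inj hx hy e) eqxx. Qed.
Arguments neq_pos {n} P {x y}.

Lemma posn_le n (P : 'S_(n.+2)) x : posn n P x <= n.+1.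
Proof. by have := posn_lt P x. Qed.

Lemma el_le n (P : 'S_(n.+2)) i : el P i <= n.+1.
Proof. by have := el_lt P i. Qed.
Arguments el_le {n} P i.
Arguments posn_le {n} P x.

Lemma F3 n k (P Q : 'S_(n.+2)) j : 4 <= n -> n - 3 <= k -> same_profile n k P Q ->
  valid_perm n P -> valid_perm n Q -> fdiff P Q j 1 2 n -> False.
Proof.
move=> hn hk hp vP vQ fd.
have hp' := prof_sym hp.
have qa := fd_qa fd.
have qale := fd_qa_le vP vQ fd.
have pb := fd_qa (fdiff_sym fd).
have pble := fd_qa_le vQ vP (fdiff_sym fd).
case: (fd) => hj _ _ _ _ pa qb pc qc pre.
have P0 := valid_posn0 vP; have Q0 := valid_posn0 vQ.
have PN := valid_posnN vP; have QN := valid_posnN vQ.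
have hN : n <= n.+1 by [].
have h1N : 1 <= n.+1 by [].
have h2N : 2 <= n.+1 by lia.
have j2 : 2 <= j.
  have := neq_pos P (leq0n n.+1) hN ltac:(lia); rewrite P0 pc; lia.
pose y := el Q j.+1.
have hy : y <= n.+1 := el_le Q _.
have qy : posn n Q y = j.+1 by apply: posn_el; lia.
have py : j <= posn n P y.
  case: (leqP j (posn n P y)) => // h; have := pre y hy (or_introl h); lia.
have y1 : y = 1.
  case: (boolP (y == 1)) => [/eqP//|hy1]; exfalso.
  have : y != 2 by apply/eqP => e; move: qy; rewrite e; lia.
  have : y != 0 by apply/eqP => e; move: qy; rewrite e; lia.
  have : y != n by apply/eqP => e; move: qy; rewrite e; lia.
  have : y != n.+1 by apply/eqP => e; move: qy; rewrite e; lia.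
  move=> h1 h2 h3 h4.
  have q1y := neq_pos Q h1N hy ltac:(by rewrite eq_sym).
  have sP : inseg P n y 1 by rewrite /inseg; lia.
  have [w [hw1 hw2 hw3]] := tmin hp' hN hy ltac:(lia) ltac:(lia) ltac:(lia) h1N sP.
  have : w = 0 \/ w = 1 by lia.
  case=> ?; subst w; move: hw2; rewrite /inseg; lia.
rewrite y1 in qy.
pose z := el P j.+1.
have hz : z <= n.+1 := el_le P _.
have pz : posn n P z = j.+1 by apply: posn_el; lia.
have z2 : z = 2.
  have sP : inseg P 1 2 z by rewrite /inseg; lia.
  have [w [hw1 hw2 hw3]] := tmax hp' h1N h2N isT ltac:(lia) ltac:(lia) hz sP.
  have e : posn n Q 1 = (posn n Q 2).+1 by lia.
  have hw : w = 2 \/ w = 1.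
    rewrite /inseg minnC maxnC in hw2.
    by case: (pos2 h2N h1N hw1 e hw2) => ->; [left|right].
  have : z != 0 by apply/eqP => e'; move: pz; rewrite e'; lia.
  have : z != 1 by apply/eqP => e'; move: pz; rewrite e'; lia.
  lia.
rewrite z2 in pz.
have h3 : 3 <= n.+1 by lia.
have p30 := neq_pos P h3 (leq0n n.+1) isT.
have p3n := neq_pos P h3 hN ltac:(lia).
have p31 := neq_pos P h3 h1N isT.
have p32 := neq_pos P h3 h2N isT.
have q3n := neq_pos Q h3 hN ltac:(lia).
have q31 := neq_pos Q h3 h1N isT.
have q32 := neq_pos Q h3 h2N isT.
case: (ltnP (posn n P 3) j) => hp3.
- have e3 := pre 3 h3 (or_introl hp3).
  have sP : inseg P 3 2 1 by rewrite /inseg; lia.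
  have [w [hw1 hw2 hw3]] := tmin hp' h3 h2N isT ltac:(lia) ltac:(lia) h1N sP.
  have : w = 0 \/ w = 1 by lia.
  case=> ?; subst w; move: hw2; rewrite /inseg; lia.
- have hq3 : j <= posn n Q 3.
    case: (leqP j (posn n Q 3)) => // h; have := pre 3 h3 (or_intror h); lia.
  have sQ : inseg Q 2 3 1 by rewrite /inseg; lia.
  have [w [hw1 hw2 hw3]] := tmin hp h2N h3 isT ltac:(lia) ltac:(lia) h1N sQ.
  have : w = 0 \/ w = 1 by lia.
  case=> ?; subst w; move: hw2; rewrite /inseg; lia.
Qed.

Lemma F2 n k (P Q : 'S_(n.+2)) j : 4 <= n -> n - 3 <= k -> same_profile n k P Q ->
  valid_perm n P -> valid_perm n Q -> fdiff P Q j n.-1 n 1 -> False.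
Proof.
move=> hn hk hp vP vQ fd.
have hp' := prof_sym hp.
have qa := fd_qa fd.
have qale := fd_qa_le vP vQ fd.
have pb := fd_qa (fdiff_sym fd).
have pble := fd_qa_le vQ vP (fdiff_sym fd).
case: (fd) => hj _ _ _ _ pa qb pc qc pre.
have P0 := valid_posn0 vP; have Q0 := valid_posn0 vQ.
have PN := valid_posnN vP; have QN := valid_posnN vQ.
have hN : n <= n.+1 by [].
have hN1 : n.-1 <= n.+1 by lia.
have h1N : 1 <= n.+1 by [].
have h2N : 2 <= n.+1 by lia.
have hNN : n.+1 <= n.+1 by [].
pose y := el P j.+1.
have hy : y <= n.+1 := el_le P _.
have py : posn n P y = j.+1 by apply: posn_el; lia.
have qy : j <= posn n Q y.
  case: (leqP j (posn n Q y)) => // h; have := pre y hy (or_intror h); lia.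
have yn : y = n.
  case: (boolP (y == n)) => [/eqP//|hyn]; exfalso.
  have : y != n.-1 by apply/eqP => e; move: py; rewrite e; lia.
  have : y != 0 by apply/eqP => e; move: py; rewrite e; lia.
  have : y != 1 by apply/eqP => e; move: py; rewrite e; lia.
  have : y != n.+1 by apply/eqP => e; move: py; rewrite e; lia.
  move=> h1 h2 h3 h4.
  have pny := neq_pos P hN hy ltac:(by rewrite eq_sym).
  have sQ : inseg Q 1 y n by rewrite /inseg; lia.
  have [w [hw1 hw2 hw3]] := tmax hp h1N hy ltac:(lia) ltac:(lia) ltac:(lia) hN sQ.
  have : w = n \/ w = n.+1 by lia.
  case=> ?; subst w; move: hw2; rewrite /inseg; lia.
rewrite yn in py.
pose z := el Q j.+1.
have hz : z <= n.+1 := el_le Q _.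
have qz : posn n Q z = j.+1 by apply: posn_el; lia.
have zn : z = n.-1.
  have sQ : inseg Q n.-1 n z by rewrite /inseg; lia.
  have [w [hw1 hw2 hw3]] := tmin hp hN1 hN ltac:(lia) ltac:(lia) ltac:(lia) hz sQ.
  have e : posn n P n = (posn n P n.-1).+1 by lia.
  have hw : w = n.-1 \/ w = n by case: (pos2 hN1 hN hw1 e hw2) => ->; [left|right].
  have : z != n by apply/eqP => e'; move: qz; rewrite e'; lia.
  have : z != n.+1 by apply/eqP => e'; move: qz; rewrite e'; lia.
  lia.
rewrite zn in qz.
have p21 := neq_pos P h2N h1N isT.
have p2a := neq_pos P h2N hN1 ltac:(lia).
have p2n := neq_pos P h2N hN ltac:(lia).
have q21 := neq_pos Q h2N h1N isT.
have q2a := neq_pos Q h2N hN1 ltac:(lia).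
have q2n := neq_pos Q h2N hN ltac:(lia).
have q2N := neq_pos Q h2N hNN ltac:(lia).
have q2le := posn_le Q 2.
case: (ltnP (posn n P 2) j) => hp2.
- have e2 := pre 2 h2N (or_introl hp2).
  have sQ : inseg Q 2 n.-1 n by rewrite /inseg; lia.
  have [w [hw1 hw2 hw3]] := tmax hp h2N hN1 ltac:(lia) ltac:(lia) ltac:(lia) hN sQ.
  have : w = n \/ w = n.+1 by lia.
  case=> ?; subst w; move: hw2; rewrite /inseg; lia.
- have hq2 : j <= posn n Q 2.
    case: (leqP j (posn n Q 2)) => // h; have := pre 2 h2N (or_intror h); lia.
  have sP : inseg P n.-1 2 n by rewrite /inseg; lia.
  have [w [hw1 hw2 hw3]] := tmax hp' hN1 h2N ltac:(lia) ltac:(lia) ltac:(lia) hN sP.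
  have : w = n \/ w = n.+1 by lia.
  case=> ?; subst w; move: hw2; rewrite /inseg; lia.
Qed.


Lemma F1a n k (P Q : 'S_(n.+2)) j b : 5 <= n -> n - 3 <= k -> same_profile n k P Q ->
  valid_perm n P -> valid_perm n Q -> fdiff P Q j n b 0 -> n - 2 <= b <= n - 1 -> False.
Proof.
move=> hn hk hp vP vQ fd hb.
have hp' := prof_sym hp.
have pb := fd_qa (fdiff_sym fd).
have pble := fd_qa_le vQ vP (fdiff_sym fd).
case: (fd) => hj _ hbN _ _ pa qb pc qc pre.
have P0 := valid_posn0 vP; have Q0 := valid_posn0 vQ.
have PN := valid_posnN vP; have QN := valid_posnN vQ.
have hN : n <= n.+1 by [].
have h0N : 0 <= n.+1 by [].
have h2N : 2 <= n.+1 by lia.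
have hNN : n.+1 <= n.+1 by [].
have j1 : j = 1 by lia.
subst j.
have p20 := neq_pos P h2N h0N isT.
have p2n := neq_pos P h2N hN ltac:(lia).
have p2N := neq_pos P h2N hNN ltac:(lia).
have q20 := neq_pos Q h2N h0N isT.
have q2N := neq_pos Q h2N hNN ltac:(lia).
have qn0 := neq_pos Q hN h0N ltac:(lia).
have q2le := posn_le Q 2.
have p2le := posn_le P 2.
have sP : inseg P 0 2 n by rewrite /inseg; lia.
have [w [hw1 hw2 hw3]] := tmax hp' h0N h2N isT ltac:(lia) ltac:(lia) hN sP.
have qn2 : posn n Q n <= posn n Q 2.
  have : w = n \/ w = n.+1 by lia.
  by case=> ?; subst w; move: hw2; rewrite /inseg; lia.
have sQ : inseg Q b 2 n by rewrite /inseg; lia.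
have [v [hv1 hv2 hv3]] := tmax hp hbN h2N ltac:(lia) ltac:(lia) ltac:(lia) hN sQ.
have : v = n \/ v = n.+1 by lia.
case=> ?; subst v; move: hv2; rewrite /inseg; lia.
Qed.


Lemma pos_pos n (P : 'S_(n.+2)) x : valid_perm n P -> x <= n.+1 -> x != 0 -> 0 < posn n P x.
Proof.
move=> v hx h; have := neq_pos P hx (leq0n _) h; rewrite valid_posn0 //; lia.
Qed.
Lemma pos_ltN n (P : 'S_(n.+2)) x : valid_perm n P -> x <= n.+1 -> x != n.+1 -> posn n P x <= n.
Proof.
move=> v hx h; have := neq_pos P hx (leqnn _) h; rewrite valid_posnN //.
have := posn_le P x; lia.
Qed.
Lemma pos_ge3 n (P : 'S_(n.+2)) x u0 u1 u2 : x <= n.+1 -> u0 <= n.+1 -> u1 <= n.+1 -> u2 <= n.+1 ->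
  x != u0 -> x != u1 -> x != u2 -> posn n P u0 = 0 -> posn n P u1 = 1 -> posn n P u2 = 2 ->
  3 <= posn n P x.
Proof.
move=> hx h0 h1 h2 n0 n1 n2 e0 e1 e2.
have := neq_pos P hx h0 n0; have := neq_pos P hx h1 n1; have := neq_pos P hx h2 n2.
rewrite e0 e1 e2; lia.
Qed.
Lemma pos_ge2 n (P : 'S_(n.+2)) x u0 u1 : x <= n.+1 -> u0 <= n.+1 -> u1 <= n.+1 ->
  x != u0 -> x != u1 -> posn n P u0 = 0 -> posn n P u1 = 1 -> 2 <= posn n P x.
Proof.
move=> hx h0 h1 n0 n1 e0 e1.
have := neq_pos P hx h0 n0; have := neq_pos P hx h1 n1.
rewrite e0 e1; lia.
Qed.
Arguments pos_pos {n P x}.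
Arguments pos_ltN {n P x}.
Arguments pos_ge3 {n} P {x u0 u1 u2}.
Arguments pos_ge2 {n} P {x u0 u1}.

Lemma F1b n k (P Q : 'S_(n.+2)) j : 5 <= n -> n - 3 <= k -> same_profile n k P Q ->
  valid_perm n P -> valid_perm n Q -> fdiff P Q j n.-1 (n - 2) 0 -> False.
Proof.
move=> hn hk hp vP vQ fd.
have hp' := prof_sym hp.
have pb := fd_qa (fdiff_sym fd).
have pble := fd_qa_le vQ vP (fdiff_sym fd).
have qa := fd_qa fd.
have qale := fd_qa_le vP vQ fd.
case: (fd) => hj _ _ _ _ pa qb pc qc _.
have P0 := valid_posn0 vP; have Q0 := valid_posn0 vQ.
have PN := valid_posnN vP; have QN := valid_posnN vQ.
have hN : n <= n.+1 by [].
have hN1 : n.-1 <= n.+1 by lia.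
have hN2 : n - 2 <= n.+1 by lia.
have h0N : 0 <= n.+1 by [].
have h2N : 2 <= n.+1 by lia.
have hNN : n.+1 <= n.+1 by [].
have j1 : j = 1 by lia.
rewrite {}j1 in pa qb pc qc pb qa.
pose w := el Q 2.
have hw : w <= n.+1 := el_le Q _.
have qw : posn n Q w = 2 by apply: posn_el; lia.
have wb : w != n - 2 by apply/eqP => e; move: qw; rewrite e; lia.
have w0 : w != 0 by apply/eqP => e; move: qw; rewrite e; lia.
have wN : w != n.+1 by apply/eqP => e; move: qw; rewrite e; lia.
have pw0 := pos_pos vP hw w0.
have pnN := pos_ltN vP hN ltac:(lia).
have qnN := pos_ltN vQ hN ltac:(lia).
have w1 : 1 <= w by lia.
have wn : w <= n by lia.
clear w0 wN.
case: (leqP w (n - 3)) => hw3.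
-
  have sP : inseg P 0 w n.-1 by rewrite /inseg; lia.
  have [v [hv1 hv2 hv3]] := tmax hp' h0N hw ltac:(lia) ltac:(lia) ltac:(lia) hN1 sP.
  have : posn n Q v = posn n Q 0 \/ posn n Q v = posn n Q (n - 2) \/ posn n Q v = posn n Q w.
    move: hv2; rewrite /inseg; lia.
  case=> [/(posn_inj hv1 h0N)|[/(posn_inj hv1 hN2)|/(posn_inj hv1 hw)]] ?; subst v; lia.
have : w = n.-1 \/ w = n by lia.
clear wb; case=> ew; rewrite ew in qw.
-
  pose z := el P 2.
  have hz : z <= n.+1 := el_le P _.
  have pz : posn n P z = 2 by apply: posn_el; lia.
  have sP : inseg P n.-1 (n - 2) z by rewrite /inseg; lia.
  have e : posn n Q n.-1 = (posn n Q (n - 2)).+1 by lia.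
  have [v [hv1 hv2 hv3]] := tmin hp' hN1 hN2 ltac:(lia) ltac:(lia) ltac:(lia) hz sP.
  have [v' [hv1' hv2' hv3']] := tmax hp' hN1 hN2 ltac:(lia) ltac:(lia) ltac:(lia) hz sP.
  rewrite /inseg minnC maxnC in hv2 hv2'.
  have hz2 : z = n - 2.
    have : z != n.-1 by apply/eqP => e'; move: pz; rewrite e'; lia.
    case: (pos2 hN2 hN1 hv1 e hv2) => ?; case: (pos2 hN2 hN1 hv1' e hv2') => ?; subst; lia.
  rewrite hz2 in pz.
  clear v hv1 hv2 hv3 v' hv1' hv2' hv3' sP e.
  pose y := el Q 3.
  have hy : y <= n.+1 := el_le Q _.
  have qy : posn n Q y = 3 by apply: posn_el; lia.
  have yb : y != n - 2 by apply/eqP => e'; move: qy; rewrite e'; lia.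
  have ya : y != n.-1 by apply/eqP => e'; move: qy; rewrite e'; lia.
  have y0 : y != 0 by apply/eqP => e'; move: qy; rewrite e'; lia.
  have yN : y != n.+1 by apply/eqP => e'; move: qy; rewrite e'; lia.
  have pyle := pos_ltN vP hy yN.
  have py3 := pos_ge3 P hy h0N hN1 hN2 y0 ya yb P0 pa pz.
  have pn3 := pos_ge3 P hN h0N hN1 hN2 ltac:(lia) ltac:(lia) ltac:(lia) P0 pa pz.
  have yn : y != n.
    apply/eqP => eyn; rewrite eyn in qy.
    have sP2 : inseg P n.-1 n (n - 2) by rewrite /inseg; lia.
    have [u [hu1 hu2 hu3]] := tmin hp' hN1 hN ltac:(lia) ltac:(lia) ltac:(lia) hN2 sP2.
    have e2 : posn n Q n = (posn n Q n.-1).+1 by lia.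
    case: (pos2 hN1 hN hu1 e2 hu2) => ?; subst u; lia.
  have y1 : 1 <= y by lia.
  have yn3 : y <= n - 3 by lia.
  clear yb ya y0 yN.
  have hpy : posn n P y < posn n P n.
    case: (ltnP (posn n P y) (posn n P n)) => // hle.
    have sP3 : inseg P 0 y n by rewrite /inseg; lia.
    have [u [hu1 hu2 hu3]] := tmax hp' h0N hy ltac:(lia) ltac:(lia) ltac:(lia) hN sP3.
    have : posn n Q u = posn n Q 0 \/ posn n Q u = posn n Q (n - 2) \/
           posn n Q u = posn n Q n.-1 \/ posn n Q u = posn n Q y.
      move: hu2; rewrite /inseg; lia.
    case=> [/(posn_inj hu1 h0N)|[/(posn_inj hu1 hN2)|[/(posn_inj hu1 hN1)|/(posn_inj hu1 hy)]]] ?; subst u; lia.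
  have sQ : inseg Q (n - 2) y n.-1 by rewrite /inseg; lia.
  have [u [hu1 hu2 hu3]] := tmax hp hN2 hy ltac:(lia) ltac:(lia) ltac:(lia) hN1 sQ.
  have : u = n.-1 \/ u = n \/ u = n.+1 by lia.
  case=> [|[|]] ?; subst u; move: hu2; rewrite /inseg; lia.
-
  have q23 := pos_ge3 Q h2N h0N hN2 hN ltac:(lia) ltac:(lia) ltac:(lia) Q0 qb qw.
  have qa3 := pos_ge3 Q hN1 h0N hN2 hN ltac:(lia) ltac:(lia) ltac:(lia) Q0 qb qw.
  have p2le := pos_ltN vP h2N ltac:(lia).
  have q2le := pos_ltN vQ h2N ltac:(lia).
  have qale' := pos_ltN vQ hN1 ltac:(lia).
  have pn0 := pos_pos vP hN ltac:(lia).
  have sQ : inseg Q 0 2 n by rewrite /inseg; lia.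
  have [u [hu1 hu2 hu3]] := tmax hp h0N h2N isT ltac:(lia) ltac:(lia) hN sQ.
  have hpn : posn n P n <= posn n P 2.
    have : u = n \/ u = n.+1 by lia.
    by case=> ?; subst u; move: hu2; rewrite /inseg; lia.
  have sP : inseg P n.-1 2 n by rewrite /inseg; lia.
  have [v [hv1 hv2 hv3]] := tmax hp' hN1 h2N ltac:(lia) ltac:(lia) ltac:(lia) hN sP.
  have : v = n \/ v = n.+1 by lia.
  case=> ?; subst v; move: hv2; rewrite /inseg; lia.
Qed.

Lemma el0 n (P : 'S_(n.+2)) : valid_perm n P -> el P 0 = 0.
Proof. move=> v; rewrite -{1}(valid_posn0 v); exact: el_posn. Qed.
Lemma elN n (P : 'S_(n.+2)) : valid_perm n P -> el P n.+1 = n.+1.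
Proof. move=> v; rewrite -{1}(valid_posnN v); exact: el_posn. Qed.

Lemma first_diff n (P Q : 'S_(n.+2)) : valid_perm n P -> valid_perm n Q -> P != Q ->
  exists j, fdiff P Q j (el P j) (el Q j) (el P j.-1).
Proof.
move=> vP vQ hne.
have ex : exists i, (i <= n.+1) && (el P i != el Q i).
  case: (boolP [exists x : 'I_n.+2, el P x != el Q x]).
  - move/existsP => [x hx]; exists x; rewrite hx andbT; exact: (ltn_ord x).
  - move=> /existsPn h; exfalso; move: hne => /eqP; apply; apply/permP => x.
    apply: val_inj; have := h x; rewrite negbK /el inord_val => /eqP; done.
case: (ex_minnP ex) => j /andP [hj hd] hmin.
have hjm : forall i, i < j -> el P i = el Q i.
  move=> i hi; apply/eqP; case: (boolP (el P i == el Q i)) => // hd'; exfalso.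
  have := hmin i; rewrite hd' andbT.
  have -> : i <= n.+1 by lia.
  move=> /(_ isT); lia.
have j0 : j != 0 by apply/eqP => e; move: hd; rewrite e el0 // el0 // eqxx.
have jN : j != n.+1 by apply/eqP => e; move: hd; rewrite e elN // elN // eqxx.
exists j; constructor.
- lia.
- exact: el_le.
- exact: el_le.
- exact: el_le.
- exact: hd.
- by apply: posn_el.
- by apply: posn_el.
- by apply: posn_el; lia.
- by rewrite hjm ?posn_el //; lia.
- move=> x hx [h|h].
  + have e := hjm _ h; rewrite el_posn // in e. by rewrite {2}e posn_el // -ltnS ltn_ord.
  + have e := hjm _ h; rewrite el_posn // in e. by rewrite -{1}e posn_el // -ltnS ltn_ord.
Qed.

Arguments first_diff {n P Q}.
Arguments FD {n k P Q j a b c}.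
Arguments F1a {n k P Q j b}.
Arguments F1b {n k P Q j}.
Arguments F2 {n k P Q j}.
Arguments F3 {n k P Q j}.

Lemma recon_main n k : 5 <= n -> n - 3 <= k -> reconstructing n k.
Proof.
move=> hn hk P Q vP vQ hp.
apply/eqP; apply: contraT => hne; exfalso.
have [j fd] := first_diff vP vQ hne.
move: (el P j) (el Q j) (el P j.-1) fd => a b c fd.
have fd' := fdiff_sym fd.
have hp' := prof_sym hp.
have d1 := FD hp vP vQ fd.
have d2 := FD hp' vQ vP fd'.
have a0 := fd_a_ne0 vP fd; have aN := fd_a_neN vP fd.
have b0 := fd_a_ne0 vQ fd'; have bN := fd_a_neN vQ fd'.
case: (fd) => hj ha hb hc hab pa qb pc qc _.
have cN : c != n.+1.
  apply/eqP => e; move: pc; rewrite e valid_posnN //; lia.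
have : c = 0 \/ c = 1 \/ c = n by lia.
case=> [ec|[ec|ec]]; rewrite ec in fd fd'.
- have : a = n \/ b = n \/ ((a = n.-1 /\ b = n - 2) \/ (a = n - 2 /\ b = n.-1)) by lia.
  case; last case.
  + move=> ea; rewrite ea in fd; apply: (F1a hn hk hp vP vQ fd); lia.
  + move=> eb; rewrite eb in fd'; apply: (F1a hn hk hp' vQ vP fd'); lia.
  + case=> [[ea eb]|[ea eb]].
    * rewrite ea eb in fd; exact: (F1b hn hk hp vP vQ fd).
    * rewrite ea eb in fd'; exact: (F1b hn hk hp' vQ vP fd').
- have : (a = n.-1 /\ b = n) \/ (a = n /\ b = n.-1) by lia.
  case=> [[ea eb]|[ea eb]].
  + rewrite ea eb in fd; apply: (F2 _ hk hp vP vQ fd); lia.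
  + rewrite ea eb in fd'; apply: (F2 _ hk hp' vQ vP fd'); lia.
- have : (a = 1 /\ b = 2) \/ (a = 2 /\ b = 1) by lia.
  case=> [[ea eb]|[ea eb]].
  + rewrite ea eb in fd; apply: (F3 _ hk hp vP vQ fd); lia.
  + rewrite ea eb in fd'; apply: (F3 _ hk hp' vQ vP fd'); lia.
Qed.

Lemma min_eq_of n (P Q : 'S_(n.+2)) t u : t <= n.+1 ->
  (forall v, v <= n.+1 -> inseg Q t u v -> exists w, [/\ w <= n.+1, inseg P t u w & w <= v]) ->
  (forall v, v <= n.+1 -> inseg P t u v -> exists w, [/\ w <= n.+1, inseg Q t u w & w <= v]) ->
  imin n P t u = imin n Q t u.
Proof.
move=> ht h1 h2.
have [v [hv1 hv2 e1]] := imin_ex Q t u ht.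
have [v' [hv1' hv2' e2]] := imin_ex P t u ht.
have [w [hw1 hw2 hw3]] := h1 v hv1 hv2.
have [w' [hw1' hw2' hw3']] := h2 v' hv1' hv2'.
have := imin_le hw1 hw2; have := imin_le hw1' hw2'; lia.
Qed.

Lemma max_eq_of n (P Q : 'S_(n.+2)) t u : t <= n.+1 ->
  (forall v, v <= n.+1 -> inseg Q t u v -> exists w, [/\ w <= n.+1, inseg P t u w & v <= w]) ->
  (forall v, v <= n.+1 -> inseg P t u v -> exists w, [/\ w <= n.+1, inseg Q t u w & v <= w]) ->
  imax n P t u = imax n Q t u.
Proof.
move=> ht h1 h2.
have [v [hv1 hv2 e1]] := imax_ex Q t u ht.
have [v' [hv1' hv2' e2]] := imax_ex P t u ht.
have [w [hw1 hw2 hw3]] := h1 v hv1 hv2.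
have [w' [hw1' hw2' hw3']] := h2 v' hv1' hv2'.
have := imax_ge hw1 hw2; have := imax_ge hw1' hw2'; lia.
Qed.

Section Swap.
Variables (n y : nat) (X Y : 'S_(n.+2)).
Hypothesis hn : 4 <= n.
Hypothesis hy : 3 <= y <= n.-1.
Hypothesis vX : valid_perm n X.
Hypothesis x1 : posn n X 1 = n - 3.
Hypothesis xn : posn n X n = n - 2.
Hypothesis y1 : posn n Y 1 = n - 3.
Hypothesis yn : posn n Y n = n - 2.
Hypothesis x2y : (posn n X 2 = n.-1 /\ posn n X y = n) \/ (posn n X 2 = n /\ posn n X y = n.-1).
Hypothesis y2 : posn n Y 2 = posn n X y.
Hypothesis yy : posn n Y y = posn n X 2.
Hypothesis hxy : forall z, z <= n.+1 -> z != 2 -> z != y -> posn n Y z = posn n X z.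

Lemma swap_cls z : z <= n.+1 ->
  z = 2 \/ z = y \/ (posn n Y z = posn n X z /\ posn n X z != n.-1 /\ posn n X z != n).
Proof.
move=> hz.
case: (boolP (z == 2)) => [/eqP|h2]; first by left.
case: (boolP (z == y)) => [/eqP|h3]; first by right; left.
right; right; split; first exact: hxy.
have hyN : y <= n.+1 by lia.
have h2N : 2 <= n.+1 by lia.
have := neq_pos X hz h2N h2.
have := neq_pos X hz hyN h3.
case: x2y => [[-> ->]|[-> ->]] => a b; split; lia.
Qed.

Lemma lh2 p : p <= n -> p != n.-1 -> p != n -> p <= n - 2.
Proof. lia. Qed.
Lemma lh3 p : p <= n - 2 -> p != n - 2 -> p <= n - 3.
Proof. lia. Qed.

Lemma swap_dom t u v : t <= n.+1 -> u <= n.+1 -> v <= n.+1 ->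
  ~ (t = y /\ u = n) -> ~ (t = n /\ u = y) -> ~ (t = y /\ u = n.+1) -> ~ (t = n.+1 /\ u = y) ->
  ~ (t = 2 /\ u = n.+1) -> ~ (t = n.+1 /\ u = 2) ->
  inseg Y t u v ->
  inseg X t u v \/ (v = y /\ inseg X t u 2 /\ inseg X t u n) \/ (v = 2 /\ inseg X t u 1 /\ inseg X t u y).
Proof.
move=> ht hu hv n1 n2 n3 n4 n5 n6.
have hyN : y <= n.+1 by lia.
have hnN : n <= n.+1 by lia.
have cl := swap_cls.
have pn2 : forall z, z <= n.+1 -> z != n -> posn n X z != n - 2.
  move=> z hz hzn; rewrite -xn; exact: neq_pos.
rewrite /inseg.
case: x2y => [[hx2 hxy2]|[hx2 hxy2]]; rewrite ?y2 ?yy hx2 hxy2.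
all: case: (cl t ht) => [et|[et|[et1 [et2 et3]]]];
case: (cl u hu) => [eu|[eu|[eu1 [eu2 eu3]]]]; (try subst t); (try subst u).
all: try (have tl : posn n X t <= n - 2 by
  (apply: lh2 => //; apply: pos_ltN => //; apply/eqP => e; subst t; lia)).
all: try (have ul : posn n X u <= n - 2 by
  (apply: lh2 => //; apply: pos_ltN => //; apply/eqP => e; subst u; lia)).
all: try (have tl3 : posn n X t <= n - 3 by
  (apply: lh3 => //; apply: pn2 => //; apply/eqP => e; subst t; lia)).
all: try (have ul3 : posn n X u <= n - 3 by
  (apply: lh3 => //; apply: pn2 => //; apply/eqP => e; subst u; lia)).
all: clear n1 n2 n3 n4 n5 n6 pn2 x2y.
all: case: (cl v hv) => [ev|[ev|[ev1 [ev2 ev3]]]]; (try subst v);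
  rewrite ?y2 ?yy ?et1 ?eu1 ?ev1 ?x1 ?xn ?hx2 ?hxy2; clear cl hxy y1 yn y2 yy; lia.
Qed.

End Swap.

Section Swap2.
Variables (n y : nat) (X Y : 'S_(n.+2)).
Hypothesis hn : 4 <= n.
Hypothesis hy : 3 <= y <= n.-1.
Hypothesis vX : valid_perm n X.
Hypothesis vY : valid_perm n Y.
Hypothesis x1 : posn n X 1 = n - 3.
Hypothesis xn : posn n X n = n - 2.
Hypothesis y1 : posn n Y 1 = n - 3.
Hypothesis yn : posn n Y n = n - 2.
Hypothesis x2 : posn n X 2 = n.-1.
Hypothesis xy : posn n X y = n.
Hypothesis y2 : posn n Y 2 = n.
Hypothesis yy : posn n Y y = n.-1.
Hypothesis hxy : forall z, z <= n.+1 -> z != 2 -> z != y -> posn n Y z = posn n X z.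

Lemma swap_wit k t u : t < u -> u <= n.+1 -> u - t <= k -> k < n - y ->
  imin n X t u = imin n Y t u /\ imax n X t u = imax n Y t u.
Proof.
move=> htu hu hk hky.
have ht : t <= n.+1 by lia.
have n1 : ~ (t = y /\ u = n) by lia.
have n2 : ~ (t = n /\ u = y) by lia.
have n3 : ~ (t = y /\ u = n.+1) by lia.
have n4 : ~ (t = n.+1 /\ u = y) by lia.
have n5 : ~ (t = 2 /\ u = n.+1) by lia.
have n6 : ~ (t = n.+1 /\ u = 2) by lia.
have hxy' : forall z, z <= n.+1 -> z != 2 -> z != y -> posn n X z = posn n Y z.
  by move=> z hz a b; rewrite hxy.
have dXY := @swap_dom n y X Y hn hy vX x1 xn y1 yn (or_introl (conj x2 xy)) (etrans y2 (esym xy)) (etrans yy (esym x2)) hxy t u.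
have dYX := @swap_dom n y Y X hn hy vY y1 yn x1 xn (or_intror (conj y2 yy)) (etrans x2 (esym yy)) (etrans xy (esym y2)) hxy' t u.
have h1N : 1 <= n.+1 by [].
have h2N : 2 <= n.+1 by lia.
have hyN : y <= n.+1 by lia.
have hnN : n <= n.+1 by lia.
split.
- apply: min_eq_of => // v hv hs.
  + case: (dXY v ht hu hv n1 n2 n3 n4 n5 n6 hs) => [h|[[-> [h _]]|[-> [h _]]]].
    * by exists v.
    * exists 2; split => //; lia.
    * exists 1; split => //.
  + case: (dYX v ht hu hv n1 n2 n3 n4 n5 n6 hs) => [h|[[-> [h _]]|[-> [h _]]]].
    * by exists v.
    * exists 2; split => //; lia.
    * exists 1; split => //.
- apply: max_eq_of => // v hv hs.
  + case: (dXY v ht hu hv n1 n2 n3 n4 n5 n6 hs) => [h|[[-> [_ h]]|[-> [_ h]]]].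
    * by exists v.
    * exists n; split => //; lia.
    * exists y; split => //; lia.
  + case: (dYX v ht hu hv n1 n2 n3 n4 n5 n6 hs) => [h|[[-> [_ h]]|[-> [_ h]]]].
    * by exists v.
    * exists n; split => //; lia.
    * exists y; split => //; lia.
Qed.

Lemma swap_dir t u : t <= n.+1 -> u <= n.+1 -> ~ (t = 2 /\ u = y) -> ~ (t = y /\ u = 2) ->
  (posn n X t < posn n X u) = (posn n Y t < posn n Y u).
Proof.
move=> ht hu n1 n2.
have h2N : 2 <= n.+1 by lia.
have hyN : y <= n.+1 by lia.
have ct : t = 2 \/ t = y \/ (posn n X t = posn n Y t /\ posn n X t != n.-1 /\ posn n X t != n).
  case: (boolP (t == 2)) => [/eqP|a]; first by left.
  case: (boolP (t == y)) => [/eqP|b]; first by right; left.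
  right; right; rewrite hxy //; split => //.
  split; apply/eqP => e; [move: a; rewrite (posn_inj ht h2N (etrans e (esym x2))) | move: b; rewrite (posn_inj ht hyN (etrans e (esym xy)))]; by rewrite eqxx.
have cu : u = 2 \/ u = y \/ (posn n X u = posn n Y u /\ posn n X u != n.-1 /\ posn n X u != n).
  case: (boolP (u == 2)) => [/eqP|a]; first by left.
  case: (boolP (u == y)) => [/eqP|b]; first by right; left.
  right; right; rewrite hxy //; split => //.
  split; apply/eqP => e; [move: a; rewrite (posn_inj hu h2N (etrans e (esym x2))) | move: b; rewrite (posn_inj hu hyN (etrans e (esym xy)))]; by rewrite eqxx.
have pt := posn_le X t; have pu := posn_le X u.
case: ct => [et|[et|[et1 [et2 et3]]]]; case: cu => [eu|[eu|[eu1 [eu2 eu3]]]];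
  (try subst t); (try subst u); rewrite ?x2 ?xy ?y2 ?yy ?et1 ?eu1; apply/idP/idP; lia.
Qed.

End Swap2.

Definition fsw n y (p : nat) : nat :=
  if p == 0 then 0
  else if p <= n - 4 then (if p + 2 < y then p + 2 else p + 3)
  else if p == n - 3 then 1 else if p == n - 2 then n
  else if p == n.-1 then 2 else if p == n then y else n.+1.

Lemma fsw_le n y p : 4 <= n -> 3 <= y <= n.-1 -> p <= n.+1 -> fsw n y p <= n.+1.
Proof. move=> hn hy hp; rewrite /fsw; repeat case: ifP => ?; lia. Qed.

Lemma fsw_inj n y p q : 4 <= n -> 3 <= y <= n.-1 -> p <= n.+1 -> q <= n.+1 ->
  fsw n y p = fsw n y q -> p = q.
Proof. move=> hn hy hp hq; rewrite /fsw; repeat case: ifP => ?; lia. Qed.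

Arguments fsw_inj {n y p q}.
Arguments fsw_le {n y p}.

Lemma inordE' m i : i < m.+1 -> nat_of_ord (@inord m i) = i.
Proof. move=> h; exact: inordK. Qed.

Lemma posn_tp n (X : 'S_(n.+2)) a b z :
  posn n (tperm a b * X)%g z = val (tperm a b ((X^-1)%g (inord z))).
Proof. by rewrite /posn invMg tpermV permM. Qed.

Lemma swap_exists n y : 4 <= n -> 3 <= y <= n.-1 ->
  exists X Y : 'S_(n.+2), valid_perm n X /\ valid_perm n Y /\ X != Y /\
    posn n X 1 = n - 3 /\ posn n X n = n - 2 /\ posn n Y 1 = n - 3 /\ posn n Y n = n - 2 /\
    posn n X 2 = n.-1 /\ posn n X y = n /\ posn n Y 2 = n /\ posn n Y y = n.-1 /\
    (forall z, z <= n.+1 -> z != 2 -> z != y -> posn n Y z = posn n X z).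
Proof.
move=> hn hy.
have inj : injective (fun i : 'I_n.+2 => (inord (fsw n y i) : 'I_n.+2)).
  move=> i j /(congr1 val) /=; rewrite !inordE'; last 2 first.
  - by rewrite ltnS; apply: fsw_le => //; rewrite -ltnS.
  - by rewrite ltnS; apply: fsw_le => //; rewrite -ltnS.
  move=> e; apply: val_inj; apply: (fsw_inj hn hy _ _ e); by rewrite -ltnS.
pose X := perm inj.
have elX : forall p, p <= n.+1 -> el X p = fsw n y p.
  move=> p hp; rewrite /el /X permE /= inordE' // inordE' //.
  by rewrite ltnS; apply: fsw_le.
have pX : forall p, p <= n.+1 -> posn n X (fsw n y p) = p.
  by move=> p hp; rewrite -elX // posn_el.
pose a : 'I_n.+2 := inord n.-1.
pose b : 'I_n.+2 := inord n.
pose Y := (tperm a b * X)%g.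
have va : nat_of_ord a = n.-1 by rewrite /a inordE' //; lia.
have vb : nat_of_ord b = n by rewrite /b inordE' //; lia.
have pY : forall z, posn n Y z = val (tperm a b ((X^-1)%g (inord z))) by move=> z; exact: posn_tp.
have f0 : fsw n y 0 = 0 by [].
have fN : fsw n y n.+1 = n.+1 by rewrite /fsw; repeat case: ifP => ?; lia.
have f1 : fsw n y (n - 3) = 1 by rewrite /fsw; repeat case: ifP => ?; lia.
have fn : fsw n y (n - 2) = n by rewrite /fsw; repeat case: ifP => ?; lia.
have f2 : fsw n y n.-1 = 2 by rewrite /fsw; repeat case: ifP => ?; lia.
have fy : fsw n y n = y by rewrite /fsw; repeat case: ifP => ?; lia.
have vX : valid_perm n X.
  split; apply: val_inj; rewrite /X permE /= inordK //.
  by rewrite fN.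
have x1 : posn n X 1 = n - 3 by have := pX (n - 3) ltac:(lia); rewrite f1.
have xn : posn n X n = n - 2 by have := pX (n - 2) ltac:(lia); rewrite fn.
have x2 : posn n X 2 = n.-1 by have := pX n.-1 ltac:(lia); rewrite f2.
have xy : posn n X y = n by have := pX n ltac:(lia); rewrite fy.
have tpo : forall o : 'I_n.+2, nat_of_ord o != n.-1 -> nat_of_ord o != n -> tperm a b o = o.
  move=> o h1 h2; apply: tpermD; apply/eqP => e; [move: h1|move: h2]; by rewrite -e ?va ?vb eqxx.
have hxy : forall z, z <= n.+1 -> z != 2 -> z != y -> posn n Y z = posn n X z.
  move=> z hz h2 h3; rewrite pY tpo //.
  - have := neq_pos X hz (_ : 2 <= n.+1) h2; rewrite x2; apply; lia.
  - have := neq_pos X hz (_ : y <= n.+1) h3; rewrite xy; apply; lia.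
have oa : (X^-1)%g (inord 2) = a.
  apply: val_inj => /=; rewrite va; exact: x2.
have ob : (X^-1)%g (inord y) = b.
  apply: val_inj => /=; rewrite vb; exact: xy.
have y2 : posn n Y 2 = n by rewrite pY oa tpermL.
have yy : posn n Y y = n.-1 by rewrite pY ob tpermR.
have vY : valid_perm n Y.
  case: vX => h0 hM; split.
  - rewrite /Y permM tpo //= ?h0 //; lia.
  - rewrite /Y permM tpo //= ?hM //; lia.
exists X, Y; do 3! split => //.
  apply/eqP => e; move: x2 y2; rewrite -e; lia.
do 2! split => //.
split; first by rewrite hxy //; lia.
split; first by rewrite hxy //; lia.
by do 4! split => //.
Qed.

Lemma swap_cex n y k : 4 <= n -> 3 <= y <= n.-1 -> k < n - y ->
  exists X Y : 'S_(n.+2), [/\ valid_perm n X, valid_perm n Y, X != Y, same_profile n k X Y &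
    (k < y - 2 -> same_dprofile n k X Y)].
Proof.
move=> hn hy hk.
have [X [Y [vX [vY [ne [x1 [xn [y1 [yn [x2 [xy [y2 [yy hxy]]]]]]]]]]]]] := swap_exists n y hn hy.
exists X, Y; split => //.
- move=> i t hi ht.
  apply: (@swap_wit n y X Y hn hy vX vY x1 xn y1 yn x2 xy y2 yy hxy k); lia.
- move=> hk2 i t hi ht.
  have [h1 h2] : imin n X t (t + i) = imin n Y t (t + i) /\ imax n X t (t + i) = imax n Y t (t + i).
    apply: (@swap_wit n y X Y hn hy vX vY x1 xn y1 yn x2 xy y2 yy hxy k); lia.
  split => //.
  apply: (@swap_dir n y X Y hn hy x1 xn y1 yn x2 xy y2 yy hxy); lia.
Qed.

Definition sposn (s : seq nat) x := index x s.
Definition smin (d : nat) (s : seq nat) t u :=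
  let lo := minn (sposn s t) (sposn s u) in let hi := maxn (sposn s t) (sposn s u) in
  foldr minn d [seq nth 0 s p | p <- iota lo (hi - lo).+1].
Definition smax (s : seq nat) t u :=
  let lo := minn (sposn s t) (sposn s u) in let hi := maxn (sposn s t) (sposn s u) in
  foldr maxn 0 [seq nth 0 s p | p <- iota lo (hi - lo).+1].
Definition prof1 n (s : seq nat) := [seq (smin n.+1 s t t.+1, smax s t t.+1) | t <- iota 0 n.+1].
Definition fullseq n (l : seq nat) := 0 :: rcons l n.+1.
Definition check n := uniq [seq prof1 n (fullseq n l) | l <- permutations (iota 1 n)].

Lemma check4 : check 4. Proof. vm_compute. reflexivity. Qed.
Lemma check3 : check 3. Proof. vm_compute. reflexivity. Qed.
Lemma check2 : check 2. Proof. vm_compute. reflexivity. Qed.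
Lemma check1 : check 1. Proof. vm_compute. reflexivity. Qed.

Lemma foldr_min_le d (l : seq nat) x : x \in l -> foldr minn d l <= x.
Proof.
elim: l => // a l IH; rewrite inE /= => /orP [/eqP ->|h]; first exact: geq_minl.
by rewrite geq_min IH ?orbT.
Qed.
Lemma foldr_min_in d (l : seq nat) : foldr minn d l = d \/ foldr minn d l \in l.
Proof.
elim: l => [|a l IH] /=; first by left.
case: (leqP a (foldr minn d l)) => h.
- by right; rewrite inE eqxx.
- case: IH => [->|IH]; [by left|by right; rewrite inE IH orbT].
Qed.
Lemma foldr_max_ge (l : seq nat) x : x \in l -> x <= foldr maxn 0 l.
Proof.
elim: l => // a l IH; rewrite inE /= => /orP [/eqP ->|h]; first exact: leq_maxl.
by rewrite leq_max IH ?orbT.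
Qed.
Lemma foldr_max_in (l : seq nat) : foldr maxn 0 l = 0 \/ foldr maxn 0 l \in l.
Proof.
elim: l => [|a l IH] /=; first by left.
case: (leqP a (foldr maxn 0 l)) => h.
- case: IH => [->|IH]; [by left|by right; rewrite inE IH orbT].
- by right; rewrite inE eqxx.
Qed.

Section Link.
Variables (n : nat) (P : 'S_(n.+2)).
Definition sP := [seq el P i | i <- iota 0 n.+2].

Lemma size_sP : size sP = n.+2.
Proof. by rewrite size_map size_iota. Qed.

Lemma nth_sP p : p < n.+2 -> nth 0 sP p = el P p.
Proof. move=> h; by rewrite (nth_map 0) ?size_iota // nth_iota. Qed.

Lemma uniq_sP : uniq sP.
Proof.
rewrite map_inj_in_uniq ?iota_uniq // => i j; rewrite !mem_iota => hi hj.
apply: el_inj; lia.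
Qed.

Lemma index_sP x : x <= n.+1 -> sposn sP x = posn n P x.
Proof.
move=> hx; rewrite /sposn -{1}(el_posn P hx) -nth_sP ?posn_lt //.
by rewrite index_uniq ?size_sP ?posn_lt ?uniq_sP.
Qed.

Lemma mem_seg v lo hi : (v \in [seq nth 0 sP p | p <- iota lo (hi - lo).+1]) ->
  lo <= hi -> hi < n.+2 -> exists p, [/\ lo <= p <= hi & v = el P p].
Proof.
move=> /mapP [p]; rewrite mem_iota => hp -> hl hh.
exists p; split; first lia. apply: nth_sP; lia.
Qed.

Lemma imin_s t u : t <= n.+1 -> u <= n.+1 -> imin n P t u = smin n.+1 sP t u.
Proof.
move=> ht hu; rewrite /smin !index_sP //.
apply/eqP; rewrite eqn_leq; apply/andP; split.
- case: (foldr_min_in n.+1 [seq nth 0 sP p | p <- iota (minn (posn n P t) (posn n P u))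
      ((maxn (posn n P t) (posn n P u) - minn (posn n P t) (posn n P u)).+1)]) => [->|h].
  + have := imin_le ht (inseg_l P t u); lia.
  + have [p [hp ->]] := mem_seg _ _ _ h ltac:(lia) ltac:(have := posn_lt P t; have := posn_lt P u; lia).
    apply: imin_le; first by have := el_lt P p.
    rewrite /inseg posn_el //; have := posn_lt P t; have := posn_lt P u; lia.
- have [v [hv hs ->]] := imin_ex P t u ht.
  apply: foldr_min_le; apply/mapP; exists (posn n P v).
  + rewrite mem_iota; move: hs; rewrite /inseg; lia.
  + by rewrite nth_sP ?posn_lt // el_posn.
Qed.

Lemma imax_s t u : t <= n.+1 -> u <= n.+1 -> imax n P t u = smax sP t u.
Proof.
move=> ht hu; rewrite /smax !index_sP //.
apply/eqP; rewrite eqn_leq; apply/andP; split.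
- have [v [hv hs ->]] := imax_ex P t u ht.
  apply: foldr_max_ge; apply/mapP; exists (posn n P v).
  + rewrite mem_iota; move: hs; rewrite /inseg; lia.
  + by rewrite nth_sP ?posn_lt // el_posn.
- case: (foldr_max_in [seq nth 0 sP p | p <- iota (minn (posn n P t) (posn n P u))
      ((maxn (posn n P t) (posn n P u) - minn (posn n P t) (posn n P u)).+1)]) => [->|h].
  + by [].
  + have [p [hp ->]] := mem_seg _ _ _ h ltac:(lia) ltac:(have := posn_lt P t; have := posn_lt P u; lia).
    apply: imax_ge; first by have := el_lt P p.
    rewrite /inseg posn_el //; have := posn_lt P t; have := posn_lt P u; lia.
Qed.

Lemma sP_full : valid_perm n P -> sP = fullseq n [seq el P i | i <- iota 1 n].
Proof.
move=> v; rewrite /sP /fullseq.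
have -> : iota 0 n.+2 = 0 :: rcons (iota 1 n) n.+1.
  have := iotaD 1 n 1; rewrite addn1 add1n /= => ->; by rewrite cats1.
by rewrite /= map_rcons el0 // elN.
Qed.

Lemma lP_perm : valid_perm n P -> [seq el P i | i <- iota 1 n] \in permutations (iota 1 n).
Proof.
move=> v; rewrite mem_permutations.
have u : uniq [seq el P i | i <- iota 1 n].
  rewrite map_inj_in_uniq ?iota_uniq // => i j; rewrite !mem_iota => hi hj.
  apply: el_inj; lia.
have sub : {subset [seq el P i | i <- iota 1 n] <= iota 1 n}.
  move=> x /mapP [i]; rewrite mem_iota => hi ->; rewrite mem_iota.
  have h0 : el P i != 0 by apply/eqP; rewrite -(el0 _ _ v) => /el_inj; lia.
  have hN : el P i != n.+1 by apply/eqP; rewrite -(elN _ _ v) => /el_inj; lia.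
  have := el_lt P i; lia.
have [_ e] := uniq_min_size u sub ltac:(by rewrite size_map).
by apply: uniq_perm => //; exact: iota_uniq.
Qed.

End Link.

Lemma uniq_map_inj (T U : eqType) (f : T -> U) (L : seq T) x y :
  uniq [seq f l | l <- L] -> x \in L -> y \in L -> f x = f y -> x = y.
Proof.
elim: L => // a L IH /= /andP [ha hu]; rewrite !inE => /orP [/eqP ->|hx] /orP [/eqP ->|hy] e //.
- move: ha; rewrite e; move/negP; case; apply/mapP; by exists y.
- move: ha; rewrite -e; move/negP; case; apply/mapP; by exists x.
- exact: IH.
Qed.

Lemma recon_small n : 1 <= n -> n <= 4 -> reconstructing n 1.
Proof.
move=> h1 h4 P Q vP vQ hp.
have ck : check n.
  case: n h1 h4 P Q vP vQ hp => [|[|[|[|[|n]]]]] // *; first [exact: check1|exact: check2|exact: check3|exact: check4].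
have e : prof1 n (fullseq n [seq el P i | i <- iota 1 n]) = prof1 n (fullseq n [seq el Q i | i <- iota 1 n]).
  rewrite -!sP_full // /prof1; apply/eq_in_map => t; rewrite mem_iota => ht.
  have [e1 e2] := hp 1 t isT ltac:(lia).
  rewrite addn1 in e1 e2.
  have a1 := @imin_s n P t t.+1 ltac:(lia) ltac:(lia).
  have a2 := @imin_s n Q t t.+1 ltac:(lia) ltac:(lia).
  have a3 := @imax_s n P t t.+1 ltac:(lia) ltac:(lia).
  have a4 := @imax_s n Q t t.+1 ltac:(lia) ltac:(lia).
  by rewrite -a1 -a2 -a3 -a4 e1 e2.
have el_eq := @uniq_map_inj _ _ (fun l => prof1 n (fullseq n l)) (permutations (iota 1 n)) _ _ ck (lP_perm n P vP) (lP_perm n Q vQ) e.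
have es : sP n P = sP n Q by rewrite !sP_full // el_eq.
apply/permP => x; apply: val_inj.
have := nth_sP n P x (ltn_ord x); have := nth_sP n Q x (ltn_ord x); rewrite es => -> .
by rewrite /el inord_val.
Qed.

Lemma ex_min_prop (D : nat -> Prop) m : D m -> exists k, D k /\ forall k', k' < k -> ~ D k'.
Proof.
move=> Dm.
suff : forall m, (exists x, x <= m /\ D x) -> exists k, D k /\ forall k', k' < k -> ~ D k'.
  by apply; exists m; split.
elim=> [|m' IH] [x [hx Dx]].
- exists 0; split => //; first by move: hx Dx; rewrite leqn0 => /eqP ->.
- case: (classic (exists x, x <= m' /\ D x)) => [h|h]; first exact: IH.
  exists x; split => // k' hk' Dk'; apply: h; exists k'; split => //; lia.
Qed.

Lemma drec_full n : dreconstructing n n.+1.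
Proof.
move=> P Q vP vQ hp.
apply/eqP; apply: contraT => hne; exfalso.
have [j fd] := first_diff vP vQ hne.
move: (el P j) (el Q j) (el P j.-1) fd => a b c fd.
have fd' := fdiff_sym fd.
have qa := fd_qa fd.
have pb := fd_qa fd'.
case: (fd) => hj ha hb hc hab pa qb pc qc _.
case: (ltngtP a b) => hlt; last by move: hab; rewrite hlt eqxx.
- have [_ _ e] := hp (b - a) a ltac:(lia) ltac:(lia).
  move: e; rewrite subnKC; last lia.
  rewrite pa qb; have -> : j < posn n P b by []; have -> : posn n Q a < j = false by apply/negbTE; rewrite -leqNgt; lia.
  by [].
- have [_ _ e] := hp (a - b) b ltac:(lia) ltac:(lia).
  move: e; rewrite subnKC; last lia.
  rewrite pa qb; have -> : j < posn n Q a by []; have -> : posn n P b < j = false by apply/negbTE; rewrite -leqNgt; lia.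
  by [].
Qed.

Theorem theorem2 (n : nat) (hn : 1 <= n) :
  is_ku n (maxn 1 (n - 3)) /\
  (4 <= n -> (exists k, is_kd n k) /\
             forall k, is_kd n k -> (n - 3 + 1) %/ 2 <= k) /\
  (n <= 3 -> is_kd n 1).
Proof.
split.
  split.
  - lia.
  - case: (leqP n 4) => h.
    + have -> : maxn 1 (n - 3) = 1 by lia.
      exact: recon_small.
    + have -> : maxn 1 (n - 3) = n - 3 by lia.
      apply: recon_main; lia.
  - move=> k' hk' hr.
    have h5 : 5 <= n by lia.
    have [X [Y [vX vY ne hpr _]]] := swap_cex n 3 k' ltac:(lia) ltac:(lia) ltac:(lia).
    by move: ne; rewrite (hr X Y vX vY hpr) eqxx.
split.
  move=> h4; split.
  - have [k [[k1 Dk] hmin]] := ex_min_prop (fun k => 1 <= k /\ dreconstructing n k) n.+1 (conj isT (drec_full n)).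
    exists k; split => //.
    + apply/andP; split => //; case: (leqP k n.+1) => // hk.
      by exfalso; apply: (hmin n.+1 hk); split => //; exact: drec_full.
    + move=> k' /andP [h1 h2] hd; exact: (hmin k' h2 (conj h1 hd)).
  - move=> k [/andP [k1 kN] hd _].
    case: (leqP ((n - 3 + 1) %/ 2) k) => // hk; exfalso.
    have hk2 : k.*2 <= n - 4.
      lia.
    have [X [Y [vX vY ne _ hdp]]] := swap_cex n (k + 3) k ltac:(lia) ltac:(lia) ltac:(lia).
    by move: ne; rewrite (hd X Y vX vY (hdp ltac:(lia))) eqxx.
move=> h3; split.
- lia.
- move=> P Q vP vQ hp; apply: (recon_small n hn (leq_trans h3 (isT : 3 <= 4)) P Q vP vQ).
  move=> i t hi ht; by case: (hp i t hi ht).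
- lia.
Qed.
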